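(* Let $N\ge5$. Define $s:(0,\infty)\to(0,\infty)$ by $s(r)=\left((N-2)\int_r^\infty(\sinh\sigma)^{1-N}d\sigma\right)^{-\frac{1}{N-2}}$, so that $\frac{ds}{s^{N-1}}=\frac{dr}{(\sinh r)^{N-1}}$, let $r=r(s)$ be its inverse, and set $\rho(s)=\left(\frac{\sinh r(s)}{s}\right)^{2(N-1)}$. Then for every $v\in C_c^\infty(0,\infty)$, $$\int_0^\infty\frac{1}{\rho(s)}(\Delta v)^2s^{N-1}ds\ge\frac{(N-1)^4}{16}\int_0^\infty\rho(s)v^2s^{N-1}ds+\frac{9}{16}\int_0^\infty\frac{\rho(s)}{r^4(s)}v^2s^{N-1}ds+\frac{(N-1)^2}{8}\int_0^\infty\frac{\rho(s)}{r^2(s)}v^2s^{N-1}ds,$$ where $\Delta v(s)=v''(s)+\frac{N-1}{s}v'(s)$ is the radial Euclidean Laplacian in $\mathbb{R}^N$. *)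

(* Defs.v *)
From Stdlib Require Import Reals ClassicalEpsilon.
From Coquelicot Require Import Coquelicot.
Open Scope R_scope.

Definition tail_int (N : nat) (r : R) : R :=
  real (Lim (fun T => RInt (fun sg => / (sinh sg) ^ (N - 1)) r T) p_infty).

Definition s_of (N : nat) (r : R) : R :=
  Rpower (INR (N - 2) * tail_int N r) (- / INR (N - 2)).

Definition r_of (N : nat) (s : R) : R :=
  epsilon (inhabits 0) (fun r => 0 < r /\ s_of N r = s).

Definition rho (N : nat) (s : R) : R :=
  (sinh (r_of N s) / s) ^ (2 * (N - 1)).

Definition lap (N : nat) (v : R -> R) (s : R) : R :=
  Derive_n v 2 s + INR (N - 1) / s * Derive v s.

Definition smooth (v : R -> R) : Prop := forall (k : nat) (x : R), ex_derive_n v k x.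

(* Main.v *)
Require Import Defs.
From Stdlib Require Import Reals Lra Lia ZArith ClassicalEpsilon.
From Coquelicot Require Import Coquelicot.
Open Scope R_scope.

Ltac nz := first [lra | (intro; nra) | (apply pow_nonzero; lra)].

Lemma sinh_pos x : 0 < x -> 0 < sinh x.
Proof. intros; rewrite <- sinh_0; now apply sinh_lt. Qed.

Lemma cosh_sq x : cosh x ^ 2 = 1 + sinh x ^ 2.
Proof.
  unfold cosh, sinh. assert (H : exp x * exp (- x) = 1).
  { rewrite <- exp_plus. replace (x + - x) with 0 by ring. apply exp_0. }
  nra.
Qed.

Lemma is_derive_sinh x : is_derive sinh x (cosh x).
Proof. unfold sinh. auto_derive; auto. unfold cosh; field. Qed.
Lemma is_derive_cosh x : is_derive cosh x (sinh x).
Proof. unfold cosh. auto_derive; auto. unfold sinh; field. Qed.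

Lemma exp_le x y : x <= y -> exp x <= exp y.
Proof. intros [H|H]. left; now apply exp_increasing. subst; lra. Qed.

Lemma nat_above r : exists K : nat, r <= INR K.
Proof.
  destruct (archimed r) as [H1 _].
  destruct (Z_le_gt_dec 0 (up r)).
  - exists (Z.to_nat (up r)). rewrite INR_IZR_INZ, Z2Nat.id by lia; lra.
  - exists 0%nat. assert (IZR (up r) < 0) by (apply IZR_lt; lia). simpl; lra.
Qed.

Lemma loc_pos r : 0 < r -> locally r (fun y => 0 < y).
Proof.
  intros Hr. exists (mkposreal r Hr). intros y Hy.
  unfold ball in Hy; simpl in Hy; unfold AbsRing_ball, abs, minus, plus, opp in Hy; simpl in Hy.
  apply Rabs_lt_between in Hy. lra.
Qed.

Lemma exRInt_cont (f : R -> R) a b :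
  (forall z, Rmin a b <= z <= Rmax a b -> continuous f z) -> ex_RInt f a b.
Proof. exact (@ex_RInt_continuous R_CompleteNormedModule f a b). Qed.
Lemma contD (f : R -> R) x : ex_derive f x -> continuous f x.
Proof. exact (@ex_derive_continuous R_AbsRing R_NormedModule f x). Qed.

Lemma isRInt_derive (f df : R -> R) a b :
  (forall x, Rmin a b <= x <= Rmax a b -> is_derive f x (df x)) ->
  (forall x, Rmin a b <= x <= Rmax a b -> continuous df x) ->
  is_RInt df a b (f b - f a).
Proof. exact (@is_RInt_derive R_CompleteNormedModule f df a b). Qed.
Lemma RInt_Chasles_R (f : R -> R) a b c :
  ex_RInt f a b -> ex_RInt f b c -> RInt f a b + RInt f b c = RInt f a c.
Proof. exact (@RInt_Chasles R_CompleteNormedModule f a b c). Qed.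

Lemma cpt_deriv (f : R -> R) x : ex_derive f x -> continuity_pt f x.
Proof. intros H; apply continuity_pt_filterlim; exact (contD f x H). Qed.

Lemma RInt_scal_R (f : R -> R) k a b : ex_RInt f a b -> RInt (fun x => k * f x) a b = k * RInt f a b.
Proof. intros H. exact (@RInt_scal R_CompleteNormedModule f a b k H). Qed.
Lemma ex_RInt_scal_R (f : R -> R) k a b : ex_RInt f a b -> ex_RInt (fun x => k * f x) a b.
Proof. intros H. exact (@ex_RInt_scal R_CompleteNormedModule f a b k H). Qed.

Definition fN (N : nat) := fun sg : R => / (sinh sg) ^ (N - 1).

Lemma fN_pos N x : 0 < x -> 0 < fN N x.
Proof. intros; unfold fN. apply Rinv_0_lt_compat, pow_lt, sinh_pos; auto. Qed.

Lemma fN_derive N x : 0 < x -> ex_derive (fN N) x.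
Proof.
  intros Hx. unfold fN. assert (H := sinh_pos x Hx). unfold sinh in *.
  auto_derive. apply pow_nonzero. lra.
Qed.

Lemma fN_cont N x : 0 < x -> continuous (fN N) x.
Proof. intros; apply contD, fN_derive; auto. Qed.

Lemma fN_exRInt N x y : 0 < x -> 0 < y -> ex_RInt (fN N) x y.
Proof.
  intros. apply exRInt_cont. intros z Hz. apply fN_cont.
  assert (0 < Rmin x y) by (apply Rmin_glb_lt; auto). lra.
Qed.

Lemma fN_upper N x : (2 <= N)%nat -> 1 <= x -> fN N x <= 4 ^ (N - 1) * exp (- x).
Proof.
  intros HN Hx. unfold fN.
  assert (Hs : exp x / 4 <= sinh x).
  { unfold sinh. assert (1 + x <= exp x) by apply exp_ineq1_le.
    assert (exp (-x) <= exp 0) by (apply exp_le; lra). rewrite exp_0 in H0. lra. }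
  assert (Hsp : 0 < sinh x) by (apply sinh_pos; lra).
  assert (He : 0 < exp x) by apply exp_pos.
  assert (H1 : exp x <= 4 * sinh x) by lra.
  assert (H2 : 4 * sinh x <= (4 * sinh x) ^ (N - 1)).
  { replace (4 * sinh x) with ((4 * sinh x) ^ 1) at 1 by ring. apply Rle_pow. 
    assert (1 + x <= exp x) by apply exp_ineq1_le. lra. lia. }
  rewrite Rpow_mult_distr in H2.
  assert (exp x * exp (-x) = 1). { rewrite <- exp_plus. replace (x + - x) with 0 by ring. apply exp_0. }
  assert (0 < sinh x ^ (N - 1)) by (apply pow_lt; auto).
  assert (0 < exp (-x)) by apply exp_pos.
  apply (Rmult_le_reg_r (sinh x ^ (N - 1))); auto.
  rewrite Rinv_l by lra. nra.
Qed.

Lemma RInt_expneg x y : RInt (fun s => exp (- s)) x y = exp (- x) - exp (- y).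
Proof.
  apply is_RInt_unique.
  replace (exp (- x) - exp (- y)) with (((fun s => - exp (- s)) y) - ((fun s => - exp (- s)) x))
    by ring.
  apply (isRInt_derive (fun s => - exp (- s))).
  - intros z _. auto_derive; auto. ring.
  - intros z _. apply contD. auto_derive. auto.
Qed.

Lemma cosh_le2 c : 0 <= c <= 1 -> cosh c <= 2.
Proof.
  intros Hc. unfold cosh. assert (exp c <= exp 1) by (apply exp_le; lra).
  assert (exp (-c) <= exp 0) by (apply exp_le; lra). rewrite exp_0 in H0.
  pose proof exp_le_3. lra.
Qed.

Lemma sinh_le2 x : 0 <= x <= 1 -> sinh x <= 2 * x.
Proof.
  intros Hx. destruct (Req_dec x 0) as [->|Hx0]. rewrite sinh_0; lra.
  destruct (MVT_gen (fun y => 2 * y - sinh y) 0 x (fun y => 2 - cosh y)) as [c [Hc Hd]].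
  - intros y _. unfold sinh, cosh. auto_derive; auto; field.
  - intros y _. apply cpt_deriv. unfold sinh. auto_derive; auto.
  - rewrite Rmin_left in Hc by lra. rewrite Rmax_right in Hc by lra.
    rewrite sinh_0 in Hd. assert (cosh c <= 2) by (apply cosh_le2; lra).
    nra.
Qed.

Lemma fN_lower N x : (3 <= N)%nat -> 0 < x <= 1 -> / 2 ^ (N - 1) * / x ^ 2 <= fN N x.
Proof.
  intros HN Hx. unfold fN.
  assert (Hs := sinh_pos x (proj1 Hx)).
  assert (H1 : sinh x ^ (N - 1) <= (2 * x) ^ (N - 1)) by (apply pow_incr; split; [lra| apply sinh_le2; lra]).
  assert (H2 : x ^ (N - 1) <= x ^ 2).
  { replace (N - 1)%nat with (2 + (N - 3))%nat by lia. rewrite pow_add.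
    assert (x ^ (N - 3) <= 1 ^ (N - 3)) by (apply pow_incr; lra). rewrite pow1 in H.
    assert (0 < x ^ 2) by (apply pow_lt; lra). nra. }
  rewrite Rpow_mult_distr in H1.
  assert (0 < 2 ^ (N - 1)) by (apply pow_lt; lra).
  assert (0 < sinh x ^ (N - 1)) by (apply pow_lt; lra).
  assert (0 < x ^ 2) by (apply pow_lt; lra).
  rewrite <- Rinv_mult. apply Rinv_le_contravar; auto. nra.
Qed.

Lemma RInt_invsq r : 0 < r -> RInt (fun s => / s ^ 2) r 1 = / r - 1.
Proof.
  intros Hr. apply is_RInt_unique.
  replace (/ r - 1) with ((fun s => - / s) 1 - (fun s => - / s) r) by (simpl; field; lra).
  apply (isRInt_derive (fun s => - / s)).
  - intros z Hz. assert (0 < Rmin r 1) by (apply Rmin_glb_lt; lra).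
    auto_derive. lra. field. lra.
  - intros z Hz. assert (0 < Rmin r 1) by (apply Rmin_glb_lt; lra).
    apply contD. auto_derive. nz.
Qed.

Lemma RInt_fN_lower N r : (3 <= N)%nat -> 0 < r <= 1 ->
  / 2 ^ (N - 1) * (/ r - 1) <= RInt (fN N) r 1.
Proof.
  intros HN Hr. rewrite <- RInt_invsq by lra.
  rewrite <- RInt_scal_R.
  2:{ apply exRInt_cont. intros z Hz. assert (0 < Rmin r 1) by (apply Rmin_glb_lt; lra).
      apply contD. auto_derive. nz. }
  apply RInt_le. lra.
  - apply (ex_RInt_scal_R (fun s => / s ^ 2)). apply exRInt_cont. intros z Hz. assert (0 < Rmin r 1) by (apply Rmin_glb_lt; lra).
      apply contD. auto_derive. nz.
  - apply fN_exRInt; lra.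
  - intros x Hx. apply fN_lower; auto; lra.
Qed.

Lemma RInt_fN_upper N x y : (2 <= N)%nat -> 1 <= x <= y ->
  RInt (fN N) x y <= 4 ^ (N - 1) * exp (- x).
Proof.
  intros HN Hxy.
  apply Rle_trans with (RInt (fun s => 4 ^ (N - 1) * exp (- s)) x y).
  - apply RInt_le. lra. apply fN_exRInt; lra.
    apply exRInt_cont. intros; apply contD; auto_derive; auto.
    intros z Hz; apply fN_upper; auto; lra.
  - rewrite (RInt_scal_R (fun s => exp (- s))).
    2:{ apply exRInt_cont. intros; apply contD; auto_derive; auto. }
    rewrite RInt_expneg.
    assert (0 < 4 ^ (N - 1)) by (apply pow_lt; lra).
    assert (0 < exp (- y)) by apply exp_pos. nra.
Qed.

Definition useq N k := RInt (fN N) 1 (INR k + 1).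

Lemma INR_pos k : 0 <= INR k.
Proof. apply pos_INR. Qed.

Lemma useq_incr N k : useq N k <= useq N (S k).
Proof.
  unfold useq. rewrite S_INR.
  rewrite <- (RInt_Chasles_R (fN N) 1 (INR k + 1) (INR k + 1 + 1)).
  2,3: apply fN_exRInt; pose proof (INR_pos k); lra.
  assert (0 <= RInt (fN N) (INR k + 1) (INR k + 1 + 1)); [|lra].
  apply RInt_ge_0. lra. apply fN_exRInt; pose proof (INR_pos k); lra.
  intros; left; apply fN_pos; pose proof (INR_pos k); lra.
Qed.

Lemma useq_nonneg N k : 0 <= useq N k.
Proof.
  unfold useq. pose proof (INR_pos k). apply RInt_ge_0. lra. apply fN_exRInt; lra.
  intros; left; apply fN_pos; lra.
Qed.

Lemma useq_bnd N k : (2 <= N)%nat -> useq N k <= 4 ^ (N - 1) * exp (- 1).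
Proof. intros; unfold useq. pose proof (INR_pos k). apply RInt_fN_upper; auto; lra. Qed.

Definition Ltail N := real (Lim_seq (useq N)).

Lemma useq_cv N : (2 <= N)%nat -> is_lim_seq (useq N) (Ltail N) /\ 0 <= Ltail N.
Proof.
  intros HN.
  assert (H := Lim_seq_correct (useq N) (ex_lim_seq_incr _ (useq_incr N))).
  assert (H1 := is_lim_seq_le _ _ _ _ (fun k => useq_bnd N k HN) H (is_lim_seq_const _)).
  assert (H2 := is_lim_seq_le _ _ _ _ (fun k => useq_nonneg N k) (is_lim_seq_const 0) H).
  unfold Ltail. destruct (Lim_seq (useq N)) as [l| |]; simpl in *; try contradiction.
  split; auto.
Qed.

Lemma tail_cv N r : (2 <= N)%nat -> 0 < r ->
  is_lim_seq (fun k => RInt (fN N) r (INR k + 1)) (RInt (fN N) r 1 + Ltail N).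
Proof.
  intros HN Hr. destruct (useq_cv N HN) as [H _].
  apply is_lim_seq_ext with (fun k => RInt (fN N) r 1 + useq N k).
  - intros k. unfold useq. apply RInt_Chasles_R; apply fN_exRInt; pose proof (INR_pos k); lra.
  - apply is_lim_seq_plus'; auto. apply is_lim_seq_const.
Qed.

Lemma tail_eq N r : (2 <= N)%nat -> 0 < r -> tail_int N r = RInt (fN N) r 1 + Ltail N.
Proof.
  intros HN Hr. unfold tail_int, Lim. simpl.
  rewrite (is_lim_seq_unique _ (RInt (fN N) r 1 + Ltail N)). reflexivity.
  apply (is_lim_seq_incr_n _ 1). 
  eapply is_lim_seq_ext; [|apply tail_cv; auto].
  intros k; simpl. rewrite plus_INR. simpl. reflexivity.
Qed.

Lemma tail_cv' N r : (2 <= N)%nat -> 0 < r ->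
  is_lim_seq (fun k => RInt (fN N) r (INR k + 1)) (tail_int N r).
Proof. intros; rewrite tail_eq; auto; apply tail_cv; auto. Qed.

Lemma tail_pos N r : (2 <= N)%nat -> 0 < r -> 0 < tail_int N r.
Proof.
  intros HN Hr.
  assert (Hnn : forall x, 0 < x -> 0 <= tail_int N x).
  { intros x Hx. destruct (nat_above x) as [K HK].
    assert (H := is_lim_seq_le_loc (fun _ => 0) (fun k => RInt (fN N) x (INR k + 1)) 0 (Finite (tail_int N x))).
    apply H; [|apply is_lim_seq_const| apply tail_cv'; auto].
    exists K. intros k Hk. apply RInt_ge_0. apply le_INR in Hk. lra.
    apply fN_exRInt; pose proof (INR_pos k); lra. intros; left; apply fN_pos; lra. }
  assert (Hd : tail_int N r - tail_int N (r + 1) = RInt (fN N) r (r + 1)).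
  { rewrite !tail_eq by (auto; lra).
    rewrite <- (RInt_Chasles_R (fN N) r (r + 1) 1) by (apply fN_exRInt; lra). ring. }
  assert (0 < RInt (fN N) r (r + 1)).
  { apply RInt_gt_0. lra. intros; apply fN_pos; lra. intros; apply fN_cont; lra. }
  specialize (Hnn (r + 1) ltac:(lra)). lra.
Qed.

Lemma tail_upper N r : (2 <= N)%nat -> 1 <= r -> tail_int N r <= 4 ^ (N - 1) * exp (- r).
Proof.
  intros HN Hr. destruct (nat_above r) as [K HK].
  assert (H := is_lim_seq_le_loc (fun k => RInt (fN N) r (INR k + 1)) (fun _ => 4 ^ (N - 1) * exp (- r)) (tail_int N r) (4 ^ (N - 1) * exp (- r))).
  apply H; [|apply tail_cv'; auto; lra| apply is_lim_seq_const].
  exists K. intros k Hk. apply le_INR in Hk. apply RInt_fN_upper; auto; lra.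
Qed.

Lemma tail_lower N r : (3 <= N)%nat -> 0 < r <= 1 -> / 2 ^ (N - 1) * (/ r - 1) <= tail_int N r.
Proof.
  intros HN Hr. rewrite tail_eq by (auto; lia || lra).
  destruct (useq_cv N ltac:(lia)) as [_ H].
  pose proof (RInt_fN_lower N r HN Hr). lra.
Qed.

Lemma tail_derive N r : (2 <= N)%nat -> 0 < r -> is_derive (tail_int N) r (- fN N r).
Proof.
  intros HN Hr.
  apply is_derive_ext_loc with (fun x => RInt (fN N) x 1 + Ltail N).
  { apply filter_imp with (fun y => 0 < y); [|apply loc_pos; auto].
    intros; symmetry; apply tail_eq; auto. }
  assert (H : is_derive (fun x => RInt (fN N) x 1) r (- fN N r)).
  apply (@is_derive_RInt' R_NormedModule (fN N) (fun x => RInt (fN N) x 1) r 1).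
  - apply filter_imp with (fun y => 0 < y); [|apply loc_pos; auto].
    intros y Hy. apply (@RInt_correct R_CompleteNormedModule). apply fN_exRInt; lra.
  - apply fN_cont; auto.
  - auto_derive. 2: ring. split; [apply fN_exRInt; lra|split; auto].
    apply filter_imp with (fun y => 0 < y); [|apply loc_pos; auto].
    intros y Hy. apply cpt_deriv, fN_derive; auto.
Qed.

Lemma m_pos N : (3 <= N)%nat -> 0 < INR (N - 2).
Proof. intros; apply lt_0_INR; lia. Qed.

Lemma sof_pos N r : 0 < s_of N r.
Proof. unfold s_of, Rpower. apply exp_pos. Qed.

Lemma sof_pow N r : (3 <= N)%nat -> 0 < r -> s_of N r ^ (N - 2) = / (INR (N - 2) * tail_int N r).
Proof.
  intros HN Hr. pose proof (m_pos N HN). pose proof (tail_pos N r ltac:(lia) Hr).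
  rewrite <- Rpower_pow by apply sof_pos. unfold s_of.
  rewrite Rpower_mult. replace (- / INR (N - 2) * INR (N - 2)) with (- (1)) by (field; lra).
  rewrite Rpower_Ropp, Rpower_1; auto. apply Rmult_lt_0_compat; auto.
Qed.

Definition dsof N r := s_of N r ^ (N - 1) * fN N r.

Lemma sof_derive N r : (3 <= N)%nat -> 0 < r -> is_derive (s_of N) r (dsof N r).
Proof.
  intros HN Hr. pose proof (m_pos N HN). pose proof (tail_pos N r ltac:(lia) Hr).
  assert (Hd := tail_derive N r ltac:(lia) Hr).
  assert (Hp := sof_pow N r HN Hr).
  unfold dsof. replace (N - 1)%nat with (S (N - 2)) by lia. rewrite <- tech_pow_Rmult, Hp.
  unfold s_of, Rpower. auto_derive.
  - split; [exists (- fN N r); auto|]. split; auto. apply Rmult_lt_0_compat; auto.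
    replace (Derive (fun x : R => tail_int N x) r) with (- fN N r) by (symmetry; apply is_derive_unique; auto). field. lra.
Qed.

Lemma sof_ex_derive N r : (3 <= N)%nat -> 0 < r -> ex_derive (s_of N) r.
Proof. intros; eexists; apply sof_derive; auto. Qed.

Lemma sof_cont N r : (3 <= N)%nat -> 0 < r -> continuous (s_of N) r.
Proof. intros; apply (contD (s_of N)), sof_ex_derive; auto. Qed.

Lemma dsof_pos N r : 0 < r -> 0 < dsof N r.
Proof. intros; unfold dsof. apply Rmult_lt_0_compat. apply pow_lt, sof_pos. apply fN_pos; auto. Qed.

Lemma dsof_cont N r : (3 <= N)%nat -> 0 < r -> continuous (dsof N) r.
Proof.
  intros HN Hr. unfold dsof.
  apply (@continuous_mult R_UniformSpace R_AbsRing (fun x => s_of N x ^ (N - 1)) (fN N)).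
  - apply (continuous_comp (s_of N) (fun y => y ^ (N - 1))). apply sof_cont; auto.
    apply contD. auto_derive. auto.
  - apply fN_cont; auto.
Qed.

Lemma sof_incr N x y : (3 <= N)%nat -> 0 < x -> x < y -> s_of N x < s_of N y.
Proof.
  intros HN Hx Hxy.
  destruct (MVT_gen (s_of N) x y (dsof N)) as [c [Hc Hd]].
  - intros z Hz. rewrite Rmin_left in Hz by lra. apply sof_derive; auto; lra.
  - intros z Hz. rewrite Rmin_left in Hz by lra. apply continuity_pt_filterlim, sof_cont; auto; lra.
  - rewrite Rmin_left in Hc by lra. pose proof (dsof_pos N c ltac:(lra)). nra.
Qed.

Lemma sof_le N x y : (3 <= N)%nat -> 0 < x -> x <= y -> s_of N x <= s_of N y.
Proof. intros HN Hx [H|H]. left; apply sof_incr; auto. subst; lra. Qed.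

Lemma sof_inj N x y : (3 <= N)%nat -> 0 < x -> 0 < y -> s_of N x = s_of N y -> x = y.
Proof.
  intros HN Hx Hy H. destruct (Rtotal_order x y) as [H1|[H1|H1]]; auto.
  apply (sof_incr N) in H1; auto; lra. apply (sof_incr N) in H1; auto; lra.
Qed.

Lemma sof_lt_iff N r s0 : (3 <= N)%nat -> 0 < r -> 0 < s0 ->
  exp (- INR (N - 2) * ln s0) < INR (N - 2) * tail_int N r -> s_of N r < s0.
Proof.
  intros HN Hr Hs H. pose proof (m_pos N HN). pose proof (tail_pos N r ltac:(lia) Hr).
  unfold s_of, Rpower. rewrite <- (exp_ln s0) by auto. apply exp_increasing.
  apply ln_increasing in H; [|apply exp_pos]. rewrite ln_exp in H.
  apply (Rmult_lt_reg_l (INR (N - 2))); auto.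
  replace (INR (N - 2) * (- / INR (N - 2) * ln (INR (N - 2) * tail_int N r)))
    with (- ln (INR (N - 2) * tail_int N r)) by (field; lra). nra.
Qed.

Lemma sof_gt_iff N r s0 : (3 <= N)%nat -> 0 < r -> 0 < s0 ->
  INR (N - 2) * tail_int N r < exp (- INR (N - 2) * ln s0) -> s0 < s_of N r.
Proof.
  intros HN Hr Hs H. pose proof (m_pos N HN). pose proof (tail_pos N r ltac:(lia) Hr).
  unfold s_of, Rpower. rewrite <- (exp_ln s0) by auto. apply exp_increasing.
  apply ln_increasing in H; [|apply Rmult_lt_0_compat; auto]. rewrite ln_exp in H.
  apply (Rmult_lt_reg_l (INR (N - 2))); auto.
  replace (INR (N - 2) * (- / INR (N - 2) * ln (INR (N - 2) * tail_int N r)))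
    with (- ln (INR (N - 2) * tail_int N r)) by (field; lra). nra.
Qed.

Lemma sof_surj N s0 : (3 <= N)%nat -> 0 < s0 -> exists r, 0 < r /\ s_of N r = s0.
Proof.
  intros HN Hs. pose proof (m_pos N HN) as Hm.
  set (K := exp (- INR (N - 2) * ln s0)).
  assert (HK : 0 < K) by apply exp_pos.
  assert (H2n : 0 < 2 ^ (N - 1)) by (apply pow_lt; lra).
  assert (H4n : 0 < 4 ^ (N - 1)) by (apply pow_lt; lra).
  set (r1 := / (2 ^ (N - 1) * (K / INR (N - 2) + 1) + 1)).
  assert (Hr1 : 0 < r1 < 1).
  { unfold r1. assert (0 < K / INR (N - 2)) by (apply Rdiv_lt_0_compat; auto).
    split. apply Rinv_0_lt_compat. nra.
    rewrite <- Rinv_1. apply Rinv_lt_contravar. nra. nra. }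
  assert (H1 : s_of N r1 < s0).
  { apply sof_lt_iff; auto; try lra.
    pose proof (tail_lower N r1 HN ltac:(lra)).
    assert (Hinv : / r1 = 2 ^ (N - 1) * (K / INR (N - 2) + 1) + 1) by (unfold r1; apply Rinv_inv).
    rewrite Hinv in H.
    replace (/ 2 ^ (N - 1) * (2 ^ (N - 1) * (K / INR (N - 2) + 1) + 1 - 1)) with (K / INR (N - 2) + 1) in H
      by (field; lra).
    apply (Rmult_le_compat_l (INR (N - 2))) in H; [|lra].
    replace (INR (N - 2) * (K / INR (N - 2) + 1)) with (K + INR (N - 2)) in H by (field; lra).
    fold K. lra. }
  set (r2 := 1 + Rabs (ln (4 ^ (N - 1) * INR (N - 2) / K))).
  assert (Hr2 : 1 <= r2) by (unfold r2; pose proof (Rabs_pos (ln (4 ^ (N - 1) * INR (N - 2) / K))); lra).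
  assert (H2 : s0 < s_of N r2).
  { apply sof_gt_iff; auto; try lra.
    pose proof (tail_upper N r2 ltac:(lia) Hr2).
    assert (exp (- r2) < K / (4 ^ (N - 1) * INR (N - 2))).
    { assert (Hq : 0 < 4 ^ (N - 1) * INR (N - 2) / K) by (apply Rdiv_lt_0_compat; nra).
      rewrite <- (exp_ln (K / (4 ^ (N - 1) * INR (N - 2)))) by (apply Rdiv_lt_0_compat; nra).
      apply exp_increasing. unfold r2.
      replace (K / (4 ^ (N - 1) * INR (N - 2))) with (/ (4 ^ (N - 1) * INR (N - 2) / K)) by (field; lra).
      rewrite ln_Rinv by auto. pose proof (Rle_abs (ln (4 ^ (N - 1) * INR (N - 2) / K))). lra. }
    apply Rle_lt_trans with (INR (N - 2) * (4 ^ (N - 1) * exp (- r2))).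
    apply Rmult_le_compat_l; lra.
    apply (Rmult_lt_compat_l (INR (N - 2) * 4 ^ (N - 1))) in H0; [|nra].
    replace (INR (N - 2) * 4 ^ (N - 1) * (K / (4 ^ (N - 1) * INR (N - 2)))) with K in H0 by (field; lra).
    fold K. rewrite <- Rmult_assoc. lra. }
  destruct (Ranalysis5.IVT_interv (fun r => s_of N r - s0) r1 r2) as [z [Hz Hz']].
  - intros x Hx. apply continuity_pt_minus. apply continuity_pt_filterlim, sof_cont; auto; lra.
    apply continuity_pt_const. intros u v; reflexivity.
  - lra.
  - lra.
  - lra.
  - exists z; split; lra.
Qed.

Lemma r_of_spec N s : (3 <= N)%nat -> 0 < s -> 0 < r_of N s /\ s_of N (r_of N s) = s.
Proof.
  intros HN Hs. unfold r_of. apply epsilon_spec. apply sof_surj; auto.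
Qed.

Lemma r_of_sof N r : (3 <= N)%nat -> 0 < r -> r_of N (s_of N r) = r.
Proof.
  intros HN Hr. destruct (r_of_spec N (s_of N r) HN (sof_pos N r)) as [H1 H2].
  apply (sof_inj N); auto.
Qed.

Lemma r_of_cont N s0 : (3 <= N)%nat -> 0 < s0 -> continuity_pt (r_of N) s0.
Proof.
  intros HN Hs. destruct (r_of_spec N s0 HN Hs) as [Hr0 Hsr].
  set (r0 := r_of N s0) in *.
  intros eps Heps. set (e := Rmin eps (r0 / 2)).
  assert (He : 0 < e) by (apply Rmin_glb_lt; lra).
  assert (He1 : e <= eps) by apply Rmin_l. assert (He2 : e <= r0 / 2) by apply Rmin_r.
  assert (Hx1 : s_of N (r0 - e) < s0) by (rewrite <- Hsr; apply sof_incr; auto; lra).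
  assert (Hx2 : s0 < s_of N (r0 + e)) by (rewrite <- Hsr at 1; apply sof_incr; auto; lra).
  exists (Rmin (s0 - s_of N (r0 - e)) (Rmin (s_of N (r0 + e) - s0) s0)).
  split. repeat apply Rmin_glb_lt; lra.
  intros s [_ Hd]. unfold R_dist in *. simpl in *. unfold R_dist in *.
  assert (Hm1 := Rmin_l (s0 - s_of N (r0 - e)) (Rmin (s_of N (r0 + e) - s0) s0)).
  assert (Hm2 := Rmin_r (s0 - s_of N (r0 - e)) (Rmin (s_of N (r0 + e) - s0) s0)).
  assert (Hm3 := Rmin_l (s_of N (r0 + e) - s0) s0).
  assert (Hm4 := Rmin_r (s_of N (r0 + e) - s0) s0).
  apply Rabs_lt_between in Hd.
  assert (Hsp : 0 < s) by lra.
  destruct (r_of_spec N s HN Hsp) as [Hr Hsr'].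
  apply Rabs_lt_between. 
  destruct (Rle_lt_dec (r_of N s) (r0 - e)) as [Hle|Hlt].
  { apply (sof_le N) in Hle; auto. lra. }
  destruct (Rle_lt_dec (r0 + e) (r_of N s)) as [Hle'|Hlt'].
  { apply (sof_le N) in Hle'; auto; lra. }
  fold r0. lra.
Qed.

Definition yv n S C u0 u1 := u1 + n / 2 * (C / S) * u0.
Definition phi n r S C u0 u1 :=
  - 2 * (n ^ 2 / 4) * u0 * yv n S C u0 u1 + (n ^ 2 / 4) * u0 ^ 2 / r
  + (yv n S C u0 u1) ^ 2 / (2 * r) + 3 / 8 * u0 ^ 2 / r ^ 3
  - 2 * (n * (n - 2) / 4) * u0 * yv n S C u0 u1 / S ^ 2.
Definition Luf n S C u1 u2 := u2 + n * (C / S) * u1.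
Definition Hf n r S C u0 u1 u2 :=
  (Luf n S C u1 u2) ^ 2 - (n ^ 2 / 4) ^ 2 * u0 ^ 2 - 9 / 16 * u0 ^ 2 / r ^ 4
  - (n ^ 2 / 4) / 2 * u0 ^ 2 / r ^ 2.
Definition Qf n r S C u0 u1 u2 :=
  let y := yv n S C u0 u1 in
  let yp := u2 - n / 2 * u0 / S ^ 2 + n / 2 * (C / S) * u1 in
  let z := yp + n / 2 * (C / S) * y in
  (z - y / (2 * r)) ^ 2 + / 4 * (y - 3 * u0 / (2 * r)) ^ 2 / r ^ 2
  + 2 * (n * (n - 2) / 4) * (y - C * u0 / S) ^ 2 / S ^ 2
  + 2 * (n ^ 2 / 4) * (y - u0 / (2 * r)) ^ 2
  + u0 ^ 2 * (((n * (n - 2) / 4) ^ 2 - 2 * (n * (n - 2) / 4)) / S ^ 4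
              + 2 * (n * (n - 2) / 4) * (n ^ 2 / 4 - 1) / S ^ 2).

Lemma alg_id n r t u0 u1 u2 : 0 < r -> 1 < t ->
  let S := (t - / t) / 2 in let C := (t + / t) / 2 in
  let y := yv n S C u0 u1 in
  let yp := u2 - n / 2 * u0 / S ^ 2 + n / 2 * (C / S) * u1 in
  Hf n r S C u0 u1 u2 = Qf n r S C u0 u1 u2 +
   (n * (C / S) * phi n r S C u0 u1 +
    (- 2 * (n ^ 2 / 4) * (u1 * y + u0 * yp) + (n ^ 2 / 4) * (2 * u0 * u1 / r - u0 ^ 2 / r ^ 2)
     + (y * yp / r - y ^ 2 / (2 * r ^ 2)) + 3 / 8 * (2 * u0 * u1 / r ^ 3 - 3 * u0 ^ 2 / r ^ 4)
     - 2 * (n * (n - 2) / 4) * ((u1 * y + u0 * yp) / S ^ 2 - 2 * u0 * y * C / S ^ 3))).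
Proof.
  intros Hr Ht. unfold Hf, Qf, phi, yv, Luf. cbv zeta.
  assert (t <> 0) by lra. assert (t * t - 1 <> 0) by nra.
  field. repeat split; auto; lra.
Qed.

Definition Phi N (U0 U1 : R -> R) r :=
  sinh r ^ (N - 1) * phi (INR (N - 1)) r (sinh r) (cosh r) (U0 r) (U1 r).

Lemma Phi_derive N (U0 U1 U2 : R -> R) r : (2 <= N)%nat -> 0 < r ->
  is_derive U0 r (U1 r) -> is_derive U1 r (U2 r) ->
  is_derive (Phi N U0 U1) r
    (sinh r ^ (N - 1) * Hf (INR (N - 1)) r (sinh r) (cosh r) (U0 r) (U1 r) (U2 r)
     - sinh r ^ (N - 1) * Qf (INR (N - 1)) r (sinh r) (cosh r) (U0 r) (U1 r) (U2 r)).
Proof.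
  intros HN Hr H0 H1. assert (Hs := sinh_pos r Hr).
  assert (Hs' : exp r - exp (-r) > 0) by (unfold sinh in Hs; lra).
  unfold Phi, phi, yv.
  replace (N - 1)%nat with (S (N - 2)) by lia.
  auto_derive.
  { repeat split; try (eexists; eassumption); repeat apply Rmult_integral_contrapositive_currified; lra. }
  replace (Derive (fun x : R => U0 x) r) with (U1 r) by (symmetry; apply is_derive_unique; auto).
  replace (Derive (fun x : R => U1 x) r) with (U2 r) by (symmetry; apply is_derive_unique; auto).
  unfold Hf, Qf, Luf, yv. cbv zeta.
  try change (Init.Nat.pred (S (N - 2))) with (N - 2)%nat.
  change (match (N - 2)%nat with 0%nat => 1 | S _ => INR (N - 2) + 1 end) with (INR (S (N - 2))).
  remember (INR (S (N - 2))) as n.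
  unfold sinh, cosh in *. rewrite exp_Ropp in *.
  rewrite <- !tech_pow_Rmult.
  remember (((exp r - / exp r) / 2) ^ (N - 2)) as P.
  assert (1 < exp r) by (rewrite <- exp_0; apply exp_increasing; auto).
  assert (exp r * exp r - 1 <> 0) by nra.
  field. repeat split; try lra.
Qed.

Lemma Qf_nonneg n r S C u0 u1 u2 : 4 <= n -> 0 < r -> 0 < S -> 0 <= Qf n r S C u0 u1 u2.
Proof.
  intros Hn Hr HS. unfold Qf, yv. cbv zeta.
  assert (Hc : 2 <= n * (n - 2) / 4) by nra.
  assert (0 < S ^ 2) by (apply pow_lt; auto).
  assert (0 < S ^ 4) by (apply pow_lt; auto).
  assert (0 < r ^ 2) by (apply pow_lt; auto).
  set (c := n * (n - 2) / 4) in *.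
  set (y := u1 + n / 2 * (C / S) * u0).
  set (z := u2 - n / 2 * u0 / S ^ 2 + n / 2 * (C / S) * u1 + n / 2 * (C / S) * y).
  assert (0 <= (z - y / (2 * r)) ^ 2) by apply pow2_ge_0.
  assert (0 <= / 4 * (y - 3 * u0 / (2 * r)) ^ 2 / r ^ 2).
  { unfold Rdiv. apply Rmult_le_pos. apply Rmult_le_pos. lra. apply pow2_ge_0. left; apply Rinv_0_lt_compat; auto. }
  assert (0 <= 2 * c * (y - C * u0 / S) ^ 2 / S ^ 2).
  { unfold Rdiv. apply Rmult_le_pos. apply Rmult_le_pos. lra. apply pow2_ge_0. left; apply Rinv_0_lt_compat; auto. }
  assert (0 <= 2 * (n ^ 2 / 4) * (y - u0 / (2 * r)) ^ 2).
  { apply Rmult_le_pos. nra. apply pow2_ge_0. }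
  assert (0 <= u0 ^ 2 * ((c ^ 2 - 2 * c) / S ^ 4 + 2 * c * (n ^ 2 / 4 - 1) / S ^ 2)).
  { apply Rmult_le_pos. apply pow2_ge_0. unfold Rdiv. apply Rplus_le_le_0_compat.
    apply Rmult_le_pos. nra. left; apply Rinv_0_lt_compat; auto.
    assert (n ^ 2 / 4 - 1 >= 3) by nra.
    apply Rmult_le_pos. apply Rmult_le_pos; lra. left; apply Rinv_0_lt_compat; auto. }
  lra.
Qed.

Definition ddsof N r :=
  INR (N - 1) * s_of N r ^ (N - 2) * dsof N r * fN N r
  - INR (N - 1) * s_of N r ^ (N - 1) * cosh r / (sinh r * sinh r ^ (N - 1)).

Lemma dsof_derive N r : (3 <= N)%nat -> 0 < r -> is_derive (dsof N) r (ddsof N r).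
Proof.
  intros HN Hr. assert (Hs := sinh_pos r Hr).
  assert (Hd := sof_derive N r HN Hr).
  assert (Hs' : exp r - exp (-r) > 0) by (unfold sinh in Hs; lra).
  unfold dsof, ddsof, fN.
  replace (N - 1)%nat with (S (N - 2)) by lia.
  auto_derive.
  { repeat split; try (eexists; eassumption); repeat apply Rmult_integral_contrapositive_currified;
     try apply pow_nonzero; lra. }
  replace (Derive (fun x : R => s_of N x) r) with (dsof N r) by (symmetry; apply is_derive_unique; auto).
  unfold dsof, fN. replace (N - 1)%nat with (S (N - 2)) by lia.
  change (match (N - 2)%nat with 0%nat => 1 | S _ => INR (N - 2) + 1 end) with (INR (S (N - 2))).
  try change (Init.Nat.pred (S (N - 2))) with (N - 2)%nat.
  remember (INR (S (N - 2))) as n.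
  unfold cosh, sinh in *. rewrite exp_Ropp in *.
  rewrite <- !tech_pow_Rmult.
  remember (((exp r - / exp r) / 2) ^ (N - 2)) as P.
  assert (HP : P <> 0) by (subst P; apply pow_nonzero; lra).
  assert (1 < exp r) by (rewrite <- exp_0; apply exp_increasing; auto).
  assert (exp r * exp r - 1 <> 0) by nra.
  field. repeat split; try lra.
Qed.

Definition U0 N (v : R -> R) r := v (s_of N r).
Definition U1 N (v : R -> R) r := Derive v (s_of N r) * dsof N r.
Definition U2 N (v : R -> R) r :=
  Derive_n v 2 (s_of N r) * dsof N r ^ 2 + Derive v (s_of N r) * ddsof N r.

Lemma U0_derive N v r : (3 <= N)%nat -> smooth v -> 0 < r -> is_derive (U0 N v) r (U1 N v r).
Proof.
  intros HN Hv Hr. unfold U0, U1.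
  assert (H1 : is_derive v (s_of N r) (Derive v (s_of N r))) by (apply Derive_correct; exact (Hv 1%nat _)).
  assert (H2 := sof_derive N r HN Hr).
  auto_derive. split; [eexists; eauto|split; [eexists; eauto|auto]].
  replace (Derive (fun x : R => s_of N x) r) with (dsof N r) by (symmetry; apply is_derive_unique; auto). rewrite Rmult_1_l; apply Rmult_comm.
Qed.

Lemma U1_derive N v r : (3 <= N)%nat -> smooth v -> 0 < r -> is_derive (U1 N v) r (U2 N v r).
Proof.
  intros HN Hv Hr. unfold U1, U2.
  assert (H1 : is_derive (Derive v) (s_of N r) (Derive_n v 2 (s_of N r))) by (apply Derive_correct; exact (Hv 2%nat _)).
  assert (H2 := sof_derive N r HN Hr).
  assert (H3 := dsof_derive N r HN Hr).
  auto_derive.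
  { repeat split; eexists; eauto. }
  replace (Derive (fun x : R => s_of N x) r) with (dsof N r) by (symmetry; apply is_derive_unique; auto).
  replace (Derive (fun x : R => dsof N x) r) with (ddsof N r) by (symmetry; apply is_derive_unique; auto).
  replace (Derive (fun x : R => Derive v x) (s_of N r)) with (Derive_n v 2 (s_of N r)) by (symmetry; apply is_derive_unique; auto).
  ring.
Qed.

Definition F1 N v s := / rho N s * (lap N v s) ^ 2 * s ^ (N - 1).
Definition F2 N (v : R -> R) s := rho N s * (v s) ^ 2 * s ^ (N - 1).
Definition F3 N (v : R -> R) s := rho N s / (r_of N s) ^ 4 * (v s) ^ 2 * s ^ (N - 1).
Definition F4 N (v : R -> R) s := rho N s / (r_of N s) ^ 2 * (v s) ^ 2 * s ^ (N - 1).
Definition G N v s := F1 N v s - (INR (N - 1) ^ 4 / 16 * F2 N v s + 9 / 16 * F3 N v s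
   + INR (N - 1) ^ 2 / 8 * F4 N v s).

Lemma H_id N v r : (3 <= N)%nat -> 0 < r ->
  dsof N r * G N v (s_of N r) =
  sinh r ^ (N - 1) * Hf (INR (N - 1)) r (sinh r) (cosh r) (U0 N v r) (U1 N v r) (U2 N v r).
Proof.
  intros HN Hr. assert (Hs := sinh_pos r Hr). assert (Hsig := sof_pos N r).
  unfold G, F1, F2, F3, F4, rho, lap. rewrite r_of_sof by auto.
  unfold U0, U1, U2, ddsof, dsof, fN, Hf, Luf.
  rewrite pow_sqr. unfold Rdiv. rewrite !Rpow_mult_distr, !pow_inv.
  replace (N - 1)%nat with (S (N - 2)) by lia.
  rewrite <- !tech_pow_Rmult.
  remember (INR (S (N - 2))) as n.
  remember (sinh r ^ (N - 2)) as P. remember (s_of N r ^ (N - 2)) as Sg.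
  remember (s_of N r) as sg. remember (sinh r) as S.
  assert (P <> 0) by (subst; apply pow_nonzero; lra).
  assert (Sg <> 0) by (subst; apply pow_nonzero; lra).
  field. repeat split; lra.
Qed.

Lemma cp_mult (f g : R -> R) x : continuity_pt f x -> continuity_pt g x -> continuity_pt (fun y => f y * g y) x.
Proof. apply continuity_pt_mult. Qed.
Lemma cp_plus (f g : R -> R) x : continuity_pt f x -> continuity_pt g x -> continuity_pt (fun y => f y + g y) x.
Proof. apply continuity_pt_plus. Qed.
Lemma cp_minus (f g : R -> R) x : continuity_pt f x -> continuity_pt g x -> continuity_pt (fun y => f y - g y) x.
Proof. apply continuity_pt_minus. Qed.
Lemma cp_inv (f : R -> R) x : continuity_pt f x -> f x <> 0 -> continuity_pt (fun y => / f y) x.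
Proof. apply continuity_pt_inv. Qed.
Lemma cp_comp (f g : R -> R) x : continuity_pt f x -> continuity_pt g (f x) -> continuity_pt (fun y => g (f y)) x.
Proof. apply continuity_pt_comp. Qed.
Lemma cp_const c x : continuity_pt (fun _ => c) x.
Proof. apply continuity_pt_const. intros a b; reflexivity. Qed.
Lemma cp_id x : continuity_pt (fun y => y) x.
Proof. apply continuity_pt_id. Qed.
Lemma cp_pow (f : R -> R) k x : continuity_pt f x -> continuity_pt (fun y => f y ^ k) x.
Proof.
  intros H. apply (cp_comp f (fun z => z ^ k)); auto. apply cpt_deriv. auto_derive; auto.
Qed.

Lemma cp_sinh x : continuity_pt sinh x.
Proof. apply cpt_deriv. eexists; apply is_derive_sinh. Qed.

Lemma smooth_cont v k x : smooth v -> continuity_pt (Derive_n v k) x.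
Proof. intros Hv. apply cpt_deriv. exact (Hv (S k) x). Qed.

Ltac cont_tac := repeat (first [ apply cp_const | apply cp_id | assumption | apply cp_minus | apply cp_plus
   | apply cp_mult | apply cp_pow | apply cp_inv ]).

Lemma G_parts_cont N v s : (3 <= N)%nat -> smooth v -> 0 < s ->
  continuity_pt (F1 N v) s /\ continuity_pt (F2 N v) s /\ continuity_pt (F3 N v) s /\
  continuity_pt (F4 N v) s.
Proof.
  intros HN Hv Hs.
  destruct (r_of_spec N s HN Hs) as [Hr _].
  assert (C0 : continuity_pt v s) by exact (smooth_cont v 0 s Hv).
  assert (C1 : continuity_pt (fun y => Derive v y) s) by exact (smooth_cont v 1 s Hv).
  assert (C2 : continuity_pt (fun y => Derive_n v 2 y) s) by exact (smooth_cont v 2 s Hv).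
  assert (C3 : continuity_pt (fun y => r_of N y) s) by (apply r_of_cont; auto).
  assert (C4 : continuity_pt (fun y => sinh (r_of N y)) s) by (apply (cp_comp (r_of N) sinh); auto; apply cp_sinh).
  assert (Hsh := sinh_pos _ Hr).
  assert (Hrho : (sinh (r_of N s) * / s) ^ (2 * (N - 1)) <> 0).
  { apply pow_nonzero. apply Rmult_integral_contrapositive_currified. lra. apply Rinv_neq_0_compat; lra. }
  assert (Hr4 : r_of N s ^ 4 <> 0) by (apply pow_nonzero; lra).
  assert (Hr2 : r_of N s ^ 2 <> 0) by (apply pow_nonzero; lra).
  assert (Hs0 : s <> 0) by lra.
  unfold F1, F2, F3, F4, rho, lap, Rdiv.
  repeat split; cont_tac.
Qed.

Lemma G_cont N v s : (3 <= N)%nat -> smooth v -> 0 < s -> continuity_pt (G N v) s.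
Proof.
  intros HN Hv Hs. destruct (G_parts_cont N v s HN Hv Hs) as [C1 [C2 [C3 C4]]].
  unfold G, Rdiv. cont_tac.
Qed.

Lemma zero_left (g : R -> R) a : continuity_pt g a -> (forall x, x < a -> g x = 0) -> g a = 0.
Proof.
  intros Hc Hz. destruct (Req_dec (g a) 0) as [E|E]; auto. exfalso.
  destruct (Hc (Rabs (g a)) ltac:(apply Rabs_pos_lt; auto)) as [d [Hd Hd']].
  specialize (Hd' (a - d / 2)). rewrite Hz in Hd' by lra.
  assert (H : dist R_met 0 (g a) < Rabs (g a)).
  { apply Hd'. split. split. constructor. lra. simpl. unfold R_dist. apply Rabs_lt_between. lra. }
  simpl in H. unfold R_dist in H. rewrite Rminus_0_l, Rabs_Ropp in H. lra.
Qed.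

Lemma zero_right (g : R -> R) a : continuity_pt g a -> (forall x, a < x -> g x = 0) -> g a = 0.
Proof.
  intros Hc Hz. destruct (Req_dec (g a) 0) as [E|E]; auto. exfalso.
  destruct (Hc (Rabs (g a)) ltac:(apply Rabs_pos_lt; auto)) as [d [Hd Hd']].
  specialize (Hd' (a + d / 2)). rewrite Hz in Hd' by lra.
  assert (H : dist R_met 0 (g a) < Rabs (g a)).
  { apply Hd'. split. split. constructor. lra. simpl. unfold R_dist. apply Rabs_lt_between. lra. }
  simpl in H. unfold R_dist in H. rewrite Rminus_0_l, Rabs_Ropp in H. lra.
Qed.

Lemma Derive_zero_loc (v : R -> R) x d : 0 < d -> (forall y, Rabs (y - x) < d -> v y = 0) -> Derive v x = 0.
Proof.
  intros Hd Hz. rewrite (Derive_ext_loc v (fun _ => 0)). apply Derive_const.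
  exists (mkposreal d Hd). intros y Hy. apply Hz. exact Hy.
Qed.

Lemma endpoint_a (v : R -> R) a b : smooth v -> (forall x, x < a \/ b < x -> v x = 0) ->
  v a = 0 /\ Derive v a = 0.
Proof.
  intros Hv Hs. split.
  - apply zero_left. exact (smooth_cont v 0 a Hv). intros; apply Hs; auto.
  - apply (zero_left (fun y => Derive v y)). exact (smooth_cont v 1 a Hv).
    intros x Hx. apply (Derive_zero_loc v x (a - x)). lra.
    intros y Hy. apply Hs. left. apply Rabs_lt_between in Hy. lra.
Qed.

Lemma endpoint_b (v : R -> R) a b : smooth v -> (forall x, x < a \/ b < x -> v x = 0) ->
  v b = 0 /\ Derive v b = 0.
Proof.
  intros Hv Hs. split.
  - apply zero_right. exact (smooth_cont v 0 b Hv). intros; apply Hs; auto.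
  - apply (zero_right (fun y => Derive v y)). exact (smooth_cont v 1 b Hv).
    intros x Hx. apply (Derive_zero_loc v x (x - b)). lra.
    intros y Hy. apply Hs. right. apply Rabs_lt_between in Hy. lra.
Qed.

Lemma theta_arg (H Phi0 Q : R -> R) ra rb : 0 < ra < rb ->
  (forall r, 0 < r -> continuous H r) -> (forall r, 0 < r -> is_derive Phi0 r (H r - Q r)) ->
  (forall r, 0 < r -> 0 <= Q r) -> Phi0 ra = 0 -> Phi0 rb = 0 -> 0 <= RInt H ra rb.
Proof.
  intros Hr Hc Hd HQ H0 H1.
  assert (Hex : forall y, 0 < y -> ex_RInt H ra y).
  { intros y Hy. apply exRInt_cont. intros z Hz. apply Hc.
    assert (0 < Rmin ra y) by (apply Rmin_glb_lt; lra). lra. }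
  assert (HT : forall x, 0 < x -> is_derive (fun r => RInt H ra r - Phi0 r) x (Q x)).
  { intros x Hx.
    assert (Hi : is_derive (fun r => RInt H ra r) x (H x)).
    { apply (@is_derive_RInt R_NormedModule H (fun r => RInt H ra r) ra x).
      apply filter_imp with (fun y => 0 < y); [|apply loc_pos; auto].
      intros y Hy. apply (@RInt_correct R_CompleteNormedModule). apply Hex; auto.
      apply Hc; auto. }
    replace (Q x) with (H x - (H x - Q x)) by ring.
    apply (is_derive_minus (fun r => RInt H ra r) Phi0); auto. }
  destruct (MVT_gen (fun r => RInt H ra r - Phi0 r) ra rb Q) as [c [Hc1 Hc2]].
  - intros x Hx. rewrite Rmin_left in Hx by lra. apply HT. lra.
  - intros x Hx. rewrite Rmin_left in Hx by lra. apply cpt_deriv. eexists; apply HT. lra.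
  - rewrite Rmin_left in Hc1 by lra. rewrite H0, H1, RInt_point in Hc2.
    assert (0 <= Q c) by (apply HQ; lra). unfold zero in Hc2; simpl in Hc2. nra.
Qed.

Lemma RInt_comp_R (f g dg : R -> R) a b :
  (forall x, Rmin a b <= x <= Rmax a b -> continuous f (g x)) ->
  (forall x, Rmin a b <= x <= Rmax a b -> is_derive g x (dg x) /\ continuous dg x) ->
  RInt (fun y => dg y * f (g y)) a b = RInt f (g a) (g b).
Proof. exact (@RInt_comp R_CompleteNormedModule f g dg a b). Qed.
Lemma RInt_minus_R (f g : R -> R) a b : ex_RInt f a b -> ex_RInt g a b ->
  RInt (fun x => f x - g x) a b = RInt f a b - RInt g a b.
Proof. exact (@RInt_minus R_CompleteNormedModule f g a b). Qed.
Lemma RInt_plus_R (f g : R -> R) a b : ex_RInt f a b -> ex_RInt g a b ->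
  RInt (fun x => f x + g x) a b = RInt f a b + RInt g a b.
Proof. exact (@RInt_plus R_CompleteNormedModule f g a b). Qed.
Lemma ex_RInt_plus_R (f g : R -> R) a b : ex_RInt f a b -> ex_RInt g a b ->
  ex_RInt (fun x => f x + g x) a b.
Proof. exact (@ex_RInt_plus R_CompleteNormedModule f g a b). Qed.

Theorem proposition6p3 (N : nat) (HN : (5 <= N)%nat)
  (v : R -> R) (a b : R) (Ha : 0 < a) (Hab : a < b)
  (Hv : smooth v) (Hsupp : forall x, x < a \/ b < x -> v x = 0) :
  RInt (fun s => / rho N s * (lap N v s) ^ 2 * s ^ (N - 1)) a b >=
    (INR (N - 1)) ^ 4 / 16 * RInt (fun s => rho N s * (v s) ^ 2 * s ^ (N - 1)) a b
  + 9 / 16 * RInt (fun s => rho N s / (r_of N s) ^ 4 * (v s) ^ 2 * s ^ (N - 1)) a b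
  + (INR (N - 1)) ^ 2 / 8 * RInt (fun s => rho N s / (r_of N s) ^ 2 * (v s) ^ 2 * s ^ (N - 1)) a b.
Proof.
  assert (HN3 : (3 <= N)%nat) by lia.
  change (RInt (F1 N v) a b >= INR (N - 1) ^ 4 / 16 * RInt (F2 N v) a b
    + 9 / 16 * RInt (F3 N v) a b + INR (N - 1) ^ 2 / 8 * RInt (F4 N v) a b).
  destruct (r_of_spec N a HN3 Ha) as [Hra Hsa].
  destruct (r_of_spec N b HN3 ltac:(lra)) as [Hrb Hsb].
  set (ra := r_of N a) in *. set (rb := r_of N b) in *.
  assert (Hrab : ra < rb).
  { destruct (Rlt_le_dec ra rb) as [H|H]; auto. apply (sof_le N) in H; auto. lra. }
  assert (Hex : forall f : R -> R, (forall s, 0 < s -> continuity_pt f s) -> ex_RInt f a b).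
  { intros f Hf. apply exRInt_cont. intros z Hz. apply continuity_pt_filterlim. apply Hf.
    rewrite Rmin_left in Hz by lra. lra. }
  assert (Hp := fun s Hs => G_parts_cont N v s HN3 Hv Hs).
  assert (E1 : ex_RInt (F1 N v) a b) by (apply Hex; intros; apply Hp; auto).
  assert (E2 : ex_RInt (F2 N v) a b) by (apply Hex; intros; apply Hp; auto).
  assert (E3 : ex_RInt (F3 N v) a b) by (apply Hex; intros; apply Hp; auto).
  assert (E4 : ex_RInt (F4 N v) a b) by (apply Hex; intros; apply Hp; auto).
  assert (HG : RInt (G N v) a b = RInt (F1 N v) a b - (INR (N - 1) ^ 4 / 16 * RInt (F2 N v) a b
    + 9 / 16 * RInt (F3 N v) a b + INR (N - 1) ^ 2 / 8 * RInt (F4 N v) a b)).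
  { set (K1 := INR (N - 1) ^ 4 / 16). set (K2 := 9 / 16). set (K3 := INR (N - 1) ^ 2 / 8).
    pose proof (ex_RInt_scal_R (F2 N v) K1 a b E2) as X2.
    pose proof (ex_RInt_scal_R (F3 N v) K2 a b E3) as X3.
    pose proof (ex_RInt_scal_R (F4 N v) K3 a b E4) as X4.
    pose proof (ex_RInt_plus_R _ _ a b X2 X3) as X23.
    pose proof (ex_RInt_plus_R _ _ a b X23 X4) as X234.
    unfold G. fold K1 K2 K3.
    rewrite (RInt_minus_R (F1 N v) _ a b E1 X234).
    rewrite (RInt_plus_R _ _ a b X23 X4).
    rewrite (RInt_plus_R _ _ a b X2 X3).
    rewrite (RInt_scal_R (F2 N v) K1 a b E2), (RInt_scal_R (F3 N v) K2 a b E3), (RInt_scal_R (F4 N v) K3 a b E4).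
    reflexivity. }
  assert (Hcomp : RInt (G N v) a b = RInt (fun r => dsof N r * G N v (s_of N r)) ra rb).
  { replace (RInt (G N v) a b) with (RInt (G N v) (s_of N ra) (s_of N rb)) by (rewrite Hsa, Hsb; reflexivity).
    symmetry. apply RInt_comp_R.
    - intros x Hx. rewrite Rmin_left in Hx by lra. apply continuity_pt_filterlim.
      apply G_cont; auto. apply sof_pos.
    - intros x Hx. rewrite Rmin_left in Hx by lra. split.
      apply sof_derive; auto; lra. apply dsof_cont; auto; lra. }
  assert (Hpos : 0 <= RInt (fun r => dsof N r * G N v (s_of N r)) ra rb).
  { destruct (endpoint_a v a b Hv Hsupp) as [Hva Hdva].
    destruct (endpoint_b v a b Hv Hsupp) as [Hvb Hdvb].
    apply (theta_arg _ (Phi N (U0 N v) (U1 N v))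
      (fun r => sinh r ^ (N - 1) * Qf (INR (N - 1)) r (sinh r) (cosh r) (U0 N v r) (U1 N v r) (U2 N v r))).
    - lra.
    - intros r Hr. apply (@continuous_mult R_UniformSpace R_AbsRing (dsof N) (fun r => G N v (s_of N r))).
      apply dsof_cont; auto.
      apply (continuous_comp (s_of N) (G N v)). apply sof_cont; auto.
      apply continuity_pt_filterlim. apply G_cont; auto. apply sof_pos.
    - intros r Hr. rewrite H_id by auto. apply Phi_derive; auto. lia.
      apply U0_derive; auto. apply U1_derive; auto.
    - intros r Hr. apply Rmult_le_pos. apply pow_le. left; apply sinh_pos; auto.
      apply Qf_nonneg; auto. replace 4 with (INR 4) by (simpl; ring). apply le_INR. lia.
      apply sinh_pos; auto.
    - unfold Phi, phi, yv, U0, U1. cbv beta. rewrite Hsa, Hva, Hdva. unfold Rdiv. ring.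
    - unfold Phi, phi, yv, U0, U1. cbv beta. rewrite Hsb, Hvb, Hdvb. unfold Rdiv. ring. }
  lra.
Qed.
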